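(* Let $\bm\sigma=\sigma_1\bm e_1+\dots+\sigma_r\bm e_r\in\mathbb{Z}^r$ be a changemaker vector with non-trivial stable coefficients (i.e. $\sigma_r\ge2$), and let $L=\langle\bm\sigma\rangle^\perp\subseteq\mathbb{Z}^r$. If $L$ admits an obtuse superbase, then $L$ admits an obtuse superbase $B$ (possibly after permuting basis vectors $\bm e_i$ with equal coefficients $\sigma_i$) such that $-\bm e_k+\bm e_{k-1}\in B$ for every $k$ with $\sigma_k=\sigma_{k-1}$.
   Context: $\mathbb{Z}^r$ has the standard pairing. A changemaker vector is $\bm\sigma=\sum\sigma_i\bm e_i$ (in some orthonormal basis) with $\sigma_1=1$ and $\sigma_{i-1}\le\sigma_i\le1+\sigma_1+\dots+\sigma_{i-1}$; its stable coefficients are the $\sigma_i\ge2$. An obtuse superbase of a rank-$k$ lattice $L$ is a spanning set $\{v_0,\dots,v_k\}$ with $v_i\cdot v_j\le0$ for $i\ne j$ and $\sum v_i=0$. *)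

(* Defs.v *)
From mathcomp Require Import all_boot all_order all_algebra all_fingroup.
Set Implicit Arguments. Unset Strict Implicit. Unset Printing Implicit Defensive.
Import Order.TTheory GRing.Theory Num.Theory.
Local Open Scope ring_scope.

Definition dotZ (r : nat) (u v : 'rV[int]_r) : int := \sum_(i < r) u 0 i * v 0 i.

Definition eZ (r : nat) (i : 'I_r) : 'rV[int]_r := delta_mx 0 i.

(* changemaker vector (indices shifted: paper's sigma_{i+1} is s 0 i) *)
Definition changemaker (r : nat) (s : 'rV[int]_r) : Prop :=
  (forall i : 'I_r, val i = 0%N -> s 0 i = 1) /\
  (forall i j : 'I_r, val j = (val i).+1 ->
      s 0 i <= s 0 j /\ s 0 j <= 1 + \sum_(k < r | (val k < val j)%N) s 0 k).

Definition orth_lattice (r : nat) (s : 'rV[int]_r) : pred 'rV[int]_r :=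
  fun x => dotZ x s == 0.

Definition obtuse_superbase (r k : nat) (L : pred 'rV[int]_r)
    (v : 'I_k.+1 -> 'rV[int]_r) : Prop :=
  [/\ (forall i, v i \in L),
      (forall x, x \in L -> exists c : 'I_k.+1 -> int, x = \sum_(i < k.+1) c i *: v i),
      (forall i j, i != j -> dotZ (v i) (v j) <= 0)
    & \sum_(i < k.+1) v i = 0].

(* Main.v *)
Require Import Defs.
From mathcomp Require Import all_boot all_order all_algebra all_fingroup.
From mathcomp Require Import zify ring lra.
Set Implicit Arguments. Unset Strict Implicit. Unset Printing Implicit Defensive.
Import Order.TTheory GRing.Theory Num.Theory.
Local Open Scope ring_scope.



Section Basics.
Variable r : nat.
Implicit Types u v w x : 'rV[int]_r.

Lemma dotZC u v : dotZ u v = dotZ v u.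
Proof. by apply: eq_bigr => i _; rewrite mulrC. Qed.

Lemma dotZDl u v w : dotZ (u + v) w = dotZ u w + dotZ v w.
Proof. by rewrite /dotZ -big_split; apply: eq_bigr => i _; rewrite mxE mulrDl. Qed.

Lemma dotZDr u v w : dotZ w (u + v) = dotZ w u + dotZ w v.
Proof. by rewrite dotZC dotZDl !(dotZC w). Qed.

Lemma dotZZl a u v : dotZ (a *: u) v = a * dotZ u v.
Proof. by rewrite /dotZ mulr_sumr; apply: eq_bigr => i _; rewrite mxE mulrA. Qed.

Lemma dotZZr a u v : dotZ v (a *: u) = a * dotZ v u.
Proof. by rewrite dotZC dotZZl dotZC. Qed.

Lemma dotZ0l u : dotZ 0 u = 0.
Proof. by rewrite /dotZ big1 // => i _; rewrite mxE mul0r. Qed.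

Lemma dotZ0r u : dotZ u 0 = 0.
Proof. by rewrite dotZC dotZ0l. Qed.

Lemma dotZNl u v : dotZ (- u) v = - dotZ u v.
Proof. by rewrite -scaleN1r dotZZl mulN1r. Qed.

Lemma dotZNr u v : dotZ v (- u) = - dotZ v u.
Proof. by rewrite dotZC dotZNl dotZC. Qed.

Lemma dotZBl u v w : dotZ (u - v) w = dotZ u w - dotZ v w.
Proof. by rewrite dotZDl dotZNl. Qed.

Lemma dotZBr u v w : dotZ w (u - v) = dotZ w u - dotZ w v.
Proof. by rewrite dotZDr dotZNr. Qed.

Lemma dotZ_suml (I : finType) (P : pred I) (F : I -> 'rV[int]_r) w :
  dotZ (\sum_(i | P i) F i) w = \sum_(i | P i) dotZ (F i) w.
Proof.
elim/big_rec2: _ => [|i y1 y2 _ <-]; first by rewrite dotZ0l.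
by rewrite dotZDl.
Qed.

Lemma dotZ_sumr (I : finType) (P : pred I) (F : I -> 'rV[int]_r) w :
  dotZ w (\sum_(i | P i) F i) = \sum_(i | P i) dotZ w (F i).
Proof. by rewrite dotZC dotZ_suml; apply: eq_bigr => i _; rewrite dotZC. Qed.

Lemma dotZ_ge0 x : 0 <= dotZ x x.
Proof. by apply: sumr_ge0 => i _; rewrite -expr2 sqr_ge0. Qed.

Lemma dotZ_eq0 x : dotZ x x = 0 -> x = 0.
Proof.
move=> /eqP; rewrite psumr_eq0 => [H|i _]; last by rewrite -expr2 sqr_ge0.
apply/matrixP => i j; rewrite ord1 mxE.
have := allP H j (mem_index_enum _); rewrite /= mulf_eq0 orbb.
by move/eqP.
Qed.

End Basics.



Lemma dotZ_eZl r (i : 'I_r) x : dotZ (eZ i) x = x 0 i.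
Proof.
rewrite /dotZ (bigD1 i) //= big1 ?addr0 => [|k /negbTE kn].
  by rewrite mxE !eqxx mul1r.
by rewrite mxE kn andbF mul0r.
Qed.

Lemma dotZ_eZr r (i : 'I_r) x : dotZ x (eZ i) = x 0 i.
Proof. by rewrite dotZC dotZ_eZl. Qed.

Lemma eZ_coord r (i k : 'I_r) : eZ i 0 k = (k == i)%:R.
Proof. by rewrite mxE eqxx. Qed.

Lemma cm_pos n (s : 'rV[int]_n.+1) : changemaker s -> forall i, 0 < s 0 i.
Proof.
case=> H0 H1 [m Hm]; elim: m Hm => [|m IH] Hm.
  by rewrite (H0 (Ordinal Hm)).
have Hm' : (m < n.+1)%N by apply: ltnW.
have [le _] := H1 (Ordinal Hm') (Ordinal Hm) erefl.
exact: lt_le_trans (IH Hm') le.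
Qed.

Lemma normL n (s : 'rV[int]_n.+1) x : changemaker s -> x \in orth_lattice s ->
  dotZ x x = 0 \/ 2 <= dotZ x x.
Proof.
move=> Hc Hx; have [h|h] := leP 2 (dotZ x x); [by right|left].
suff -> : x = 0 by rewrite dotZ0l.
apply/matrixP => i k; rewrite ord1 mxE.
apply/eqP; apply/negPn/negP => xk.
have Hs : dotZ x x = x 0 k * x 0 k + \sum_(j | j != k) x 0 j * x 0 j.
  by rewrite /dotZ (bigD1 k).
have Hge : 0 <= \sum_(j | j != k) x 0 j * x 0 j.
  by apply: sumr_ge0 => j _; rewrite -expr2 sqr_ge0.
have Hk1 : 1 <= x 0 k * x 0 k by move: xk; rewrite -expr2; nia.
have H0 : \sum_(j | j != k) x 0 j * x 0 j = 0 by lia.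
move/eqP: H0; rewrite psumr_eq0 => [Hall|j _]; last by rewrite -expr2 sqr_ge0.
have Hoth : forall j, j != k -> x 0 j = 0.
  move=> j jk; have := allP Hall j (mem_index_enum _).
  by rewrite jk /= mulf_eq0 orbb => /eqP.
move: Hx; rewrite /orth_lattice unfold_in /= /dotZ (bigD1 k) //= big1 => [|j jk].
  rewrite addr0 mulf_eq0 (negbTE xk) /=.
  by have := cm_pos Hc k; rewrite lt0r => /andP[/negbTE ->].
by rewrite Hoth // mul0r.
Qed.



Section Lat.
Variable n : nat.
Variable s : 'rV[int]_n.+1.
Notation L := (orth_lattice s).
Notation I := 'I_n.+1.

Lemma inL x : (x \in L) = (dotZ x s == 0).
Proof. by rewrite /orth_lattice unfold_in. Qed.

Lemma inLD x y : x \in L -> y \in L -> x + y \in L.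
Proof. by rewrite !inL dotZDl => /eqP-> /eqP->; rewrite addr0. Qed.

Lemma inLN x : x \in L -> - x \in L.
Proof. by rewrite !inL dotZNl => /eqP->; rewrite oppr0. Qed.

Lemma inLZ a x : x \in L -> a *: x \in L.
Proof. by rewrite !inL dotZZl => /eqP->; rewrite mulr0. Qed.

Lemma inL0 : 0 \in L.
Proof. by rewrite inL dotZ0l. Qed.

Lemma inL_sum (J : finType) (P : pred J) (F : J -> 'rV[int]_n.+1) :
  (forall i, P i -> F i \in L) -> \sum_(i | P i) F i \in L.
Proof.
move=> H; elim/big_rec: _ => [|i x Pi Hx]; first exact: inL0.
by apply: inLD => //; apply: H.
Qed.

Definition inspan (w : I -> 'rV[int]_n.+1) x :=
  exists c : I -> int, x = \sum_(i < n.+1) c i *: w i.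

Lemma inspan0 w : inspan w 0.
Proof. by exists (fun _ => 0); rewrite big1 // => i _; rewrite scale0r. Qed.

Lemma inspanD w x y : inspan w x -> inspan w y -> inspan w (x + y).
Proof.
move=> [c ->] [d ->]; exists (fun i => c i + d i).
by rewrite -big_split; apply: eq_bigr => i _; rewrite scalerDl.
Qed.

Lemma inspanZ w a x : inspan w x -> inspan w (a *: x).
Proof.
move=> [c ->]; exists (fun i => a * c i).
by rewrite scaler_sumr; apply: eq_bigr => i _; rewrite scalerA.
Qed.

Lemma inspanN w x : inspan w x -> inspan w (- x).
Proof. by move=> H; rewrite -scaleN1r; apply: inspanZ. Qed.

Lemma inspanB w x y : inspan w x -> inspan w y -> inspan w (x - y).
Proof. by move=> H1 H2; apply: inspanD => //; apply: inspanN. Qed.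

Lemma inspan_gen w j : inspan w (w j).
Proof.
exists (fun i => (i == j)%:R); rewrite (bigD1 j) //= eqxx scale1r big1 ?addr0 //.
by move=> i /negbTE ->; rewrite scale0r.
Qed.

Lemma inspan_sum w (P : pred I) (F : I -> 'rV[int]_n.+1) :
  (forall i, P i -> inspan w (F i)) -> inspan w (\sum_(i | P i) F i).
Proof.
move=> H; elim/big_rec: _ => [|i x Pi Hx]; first exact: inspan0.
by apply: inspanD => //; apply: H.
Qed.

Lemma inspan_trans w w' x : (forall i, inspan w' (w i)) -> inspan w x -> inspan w' x.
Proof.
move=> H [c ->]; apply: inspan_sum => i _; exact/inspanZ/H.
Qed.

Lemma sumZ_shift (v : I -> 'rV[int]_n.+1) (c : I -> int) b :
  \sum_(i < n.+1) v i = 0 ->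
  \sum_(i < n.+1) (c i + b) *: v i = \sum_(i < n.+1) c i *: v i.
Proof.
move=> H0; under eq_bigr do rewrite scalerDl.
by rewrite big_split /= -scaler_sumr H0 scaler0 addr0.
Qed.

Lemma levelset (v : I -> 'rV[int]_n.+1) : changemaker s ->
  obtuse_superbase L v -> forall x, x \in L -> dotZ x x = 2 ->
  exists S : {set I}, x = \sum_(i in S) v i.
Proof.
move=> Hc [HvL Hspan Hob H0] x Hx Hxx.
have main : forall K : nat, forall c : I -> int, (forall i, 0 <= c i <= K%:Z) ->
    x = \sum_(i < n.+1) c i *: v i -> exists S : {set I}, x = \sum_(i in S) v i.
  elim => [|K IH] c Hc0 Hxc.
    move: Hxx; rewrite Hxc big1 ?dotZ0l // => i _.
    have ci0 : c i = 0 by have := Hc0 i; lia.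
    by rewrite ci0 scale0r.
  pose S := [set i | c i == K.+1%:Z].
  pose c1 := fun i => c i - (i \in S)%:R.
  pose x1 := \sum_(i < n.+1) c1 i *: v i.
  pose vS := \sum_(i in S) v i.
  have Hsplit : x = x1 + vS.
    rewrite Hxc /x1 /vS (big_mkcond (fun i => i \in S)) /= -big_split /=.
    apply: eq_bigr => i _; rewrite /c1; case: (i \in S) => /=.
      by rewrite scalerBl scale1r subrK.
    by rewrite subr0 addr0.
  have Hx1L : x1 \in L by apply: inL_sum => i _; apply/inLZ/HvL.
  have HvSL : vS \in L by apply: inL_sum => i _; apply/HvL.
  have Hcross : 0 <= dotZ x1 vS.
    have -> : x1 = \sum_(i < n.+1) (c1 i + (- K%:Z)) *: v i by rewrite sumZ_shift.
    rewrite dotZ_suml; apply: sumr_ge0 => i _; rewrite dotZZl.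
    case iS : (i \in S).
      rewrite /c1 iS; move: iS; rewrite inE => /eqP ->.
      by rewrite (_ : _ + _ = 0) ?mul0r //; lia.
    apply: mulr_le0.
      rewrite /c1 iS; move: iS; rewrite inE => /negbT ciK.
      have := Hc0 i; move: ciK; lia.
    rewrite /vS dotZ_sumr; apply: sumr_le0 => j jS; apply: Hob.
    by apply/eqP => ij; move: iS; rewrite ij jS.
  have Hexp : dotZ x x = dotZ x1 x1 + 2 * dotZ x1 vS + dotZ vS vS.
    rewrite Hsplit !dotZDl !dotZDr (dotZC vS x1); ring.
  have := normL Hc Hx1L; have := normL Hc HvSL.
  have := dotZ_ge0 x1; have := dotZ_ge0 vS.
  move=> g1 g2 [hS|hS] [h1|h1]; try lia.
  - exists S; rewrite Hsplit (dotZ_eq0 h1); by rewrite add0r.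
  - apply: (IH c1); last by rewrite Hsplit (dotZ_eq0 hS) addr0.
    move=> i; rewrite /c1; case iS: (i \in S).
      by move: iS; rewrite inE => /eqP ->; lia.
    move: iS; rewrite inE => /negbT ciK; have := Hc0 i; move: ciK; lia.
  - exists S; rewrite Hsplit (dotZ_eq0 h1); by rewrite add0r.
have [c Hxc] := Hspan x Hx.
pose B := \sum_(i < n.+1) `|c i|.
have HB : forall i, `|c i| <= B.
  move=> i; rewrite /B (bigD1 i) //= lerDl; apply: sumr_ge0 => *; exact: normr_ge0.
apply: (main (absz (B + B)) (fun i => c i + B)).
  move=> i; have := HB i; have : 0 <= B by apply: sumr_ge0 => *; exact: normr_ge0.
  by lia.
by rewrite sumZ_shift.
Qed.

End Lat.



Section Sums.
Variable J : finType.
Implicit Types (P : pred J) (F : J -> int).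

Lemma sum_le1 P F j : (forall k, P k -> F k <= 0) -> P j -> \sum_(i | P i) F i <= F j.
Proof.
move=> H Pj; rewrite (bigD1 j) //= gerDl; apply: sumr_le0 => i /andP[Pi _]; exact: H.
Qed.

Lemma sum_le2 P F j k : (forall k, P k -> F k <= 0) -> P j -> P k -> j != k ->
  \sum_(i | P i) F i <= F j + F k.
Proof.
move=> H Pj Pk jk; rewrite (bigD1 j) //= (bigD1 k) /=; last by rewrite Pk eq_sym.
rewrite addrA gerDl; apply: sumr_le0 => i /andP[/andP[Pi _] _]; exact: H.
Qed.

Lemma sum_le3 P F j k l : (forall k, P k -> F k <= 0) -> P j -> P k -> P l ->
  j != k -> j != l -> k != l ->
  \sum_(i | P i) F i <= F j + F k + F l.
Proof.
move=> H Pj Pk Pl jk jl kl; rewrite (bigD1 j) //= (bigD1 k) /=; last by rewrite Pk eq_sym.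
rewrite (bigD1 l) /=; last by rewrite Pl eq_sym jl eq_sym.
rewrite !addrA gerDl; apply: sumr_le0 => i /andP[/andP[/andP[Pi _] _] _]; exact: H.
Qed.

Lemma sum_exists P F : 1 <= \sum_(i | P i) F i -> exists i, P i /\ 1 <= F i.
Proof.
case: (boolP [exists i, P i && (1 <= F i)]) => [/existsP [i /andP[]]|/existsPn H].
  by move=> Pi Fi; exists i.
have : \sum_(i | P i) F i <= 0.
  apply: sumr_le0 => i Pi; have := H i; rewrite Pi /=; lia.
lia.
Qed.

Lemma sum_two P F j k : P j -> P k -> j != k -> (forall i, P i -> i != j -> i != k -> F i = 0) ->
  \sum_(i | P i) F i = F j + F k.
Proof.
move=> Pj Pk jk H; rewrite (bigD1 j) //= (bigD1 k) /=; last by rewrite Pk eq_sym.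
rewrite big1 ?addr0 ?addrA // => i /andP[/andP[Pi ij] ik]; exact: H.
Qed.

Lemma sum_one P F j : P j -> (forall i, P i -> i != j -> F i = 0) ->
  \sum_(i | P i) F i = F j.
Proof.
move=> Pj H; rewrite (bigD1 j) //= big1 ?addr0 // => i /andP[Pi ij]; exact: H.
Qed.

End Sums.



Ltac lia' := repeat match goal with H : is_true (_ != _) |- _ => clear H | H : is_true (_ \notin _) |- _ => clear H | H : is_true (_ \in _) |- _ => clear H end; lia.

Ltac vring := apply/rowP => ?; rewrite !mxE; ring.

Lemma sumV_diff (V : zmodType) (J : finType) (w v : J -> V) (A : pred J) :
  (forall i, ~~ A i -> w i = v i) ->
  \sum_i w i = \sum_i v i + \sum_(i | A i) (w i - v i).
Proof.
move=> H; rewrite (bigID A predT w) (bigID A predT v) /=.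
rewrite sumrB (eq_bigr (fun i => v i) (fun i Ai => H i Ai)) /=.
by rewrite [RHS]addrC addrA subrK.
Qed.

Lemma sumV_one (V : zmodType) (J : finType) (F : J -> V) (P : pred J) j :
  P j -> (forall i, P i -> i != j -> F i = 0) -> \sum_(i | P i) F i = F j.
Proof. by move=> Pj H; rewrite (bigD1 j) //= big1 ?addr0 // => i /andP[]; apply: H. Qed.

Lemma sumV_two (V : zmodType) (J : finType) (F : J -> V) (P : pred J) j k :
  P j -> P k -> j != k -> (forall i, P i -> i != j -> i != k -> F i = 0) ->
  \sum_(i | P i) F i = F j + F k.
Proof.
move=> Pj Pk jk H; rewrite (bigD1 j) //= (bigD1 k) /=; last by rewrite Pk eq_sym.
rewrite big1 ?addr0 ?addrA // => i /andP[/andP[Pi ij] ik]; exact: H.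
Qed.

Lemma sumV_three (V : zmodType) (J : finType) (F : J -> V) (P : pred J) j k l :
  P j -> P k -> P l -> j != k -> j != l -> k != l ->
  (forall i, P i -> i != j -> i != k -> i != l -> F i = 0) ->
  \sum_(i | P i) F i = F j + F k + F l.
Proof.
move=> Pj Pk Pl jk jl kl H; rewrite (bigD1 j) //= (bigD1 k) /=; last by rewrite Pk eq_sym.
rewrite (bigD1 l) /=; last by rewrite Pl eq_sym jl eq_sym.
rewrite big1 ?addr0 ?addrA // => i /andP[/andP[/andP[Pi ij] ik] il]; exact: H.
Qed.

Lemma pair_combine r (I : finType) (w : I -> 'rV[int]_r) t s t' :
  (forall o, o != t -> dotZ (w t) (w o) <= 0) ->
  (forall o, o != t -> o != s -> dotZ (w s) (w o) <= 0) ->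
  (forall o, o != t -> o != s -> o != t' -> dotZ (w t') (w o) <= 0) ->
  (forall i j, i != j -> i != t -> i != s -> i != t' -> j != t -> j != s -> j != t' ->
     dotZ (w i) (w j) <= 0) ->
  forall i j, i != j -> dotZ (w i) (w j) <= 0.
Proof.
move=> H1 H2 H3 H4 i j ij.
case: (eqVneq i t) => [Ei|it]; first by rewrite Ei; apply: H1; rewrite eq_sym -Ei.
case: (eqVneq j t) => [Ej|jt]; first by rewrite Ej dotZC; apply: H1.
case: (eqVneq i s) => [Ei|isn]; first by rewrite Ei; apply: H2 => //; rewrite eq_sym -Ei.
case: (eqVneq j s) => [Ej|js]; first by rewrite Ej dotZC; apply: H2.
case: (eqVneq i t') => [Ei|it']; first by rewrite Ei; apply: H3 => //; rewrite eq_sym -Ei.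
case: (eqVneq j t') => [Ej|jt']; first by rewrite Ej dotZC; apply: H3.
exact: H4.
Qed.

Section Move.
Variable n : nat.
Variable sg : 'rV[int]_n.+1.
Notation L := (orth_lattice sg).
Notation I := 'I_n.+1.
Variable v : I -> 'rV[int]_n.+1.
Hypothesis Hv : obtuse_superbase L v.
Variable S : {set I}.
Let u := \sum_(i in S) v i.
Hypothesis Huu : dotZ u u = 2.
Variable zo : option I.
Hypothesis Hz : forall z, zo = Some z -> 0 <= dotZ (v z) u <= 1.

Let a i := dotZ (v i) u.
Let q i j := dotZ (v i) (v j).

Lemma HvL i : v i \in L. Proof. by case: Hv. Qed.
Lemma Hob i j : i != j -> q i j <= 0. Proof. by case: Hv => _ _ H _; apply: H. Qed.
Lemma Hsum0 : \sum_(i < n.+1) v i = 0. Proof. by case: Hv. Qed.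
Lemma HuL : u \in L. Proof. by apply: inL_sum => i _; apply: HvL. Qed.

Lemma qC i j : q i j = q j i. Proof. exact: dotZC. Qed.

Lemma sum_notS : \sum_(i | i \notin S) v i = - u.
Proof.
apply/eqP; rewrite -subr_eq0 opprK addrC /u.
by rewrite -(bigID (fun i => i \in S) predT v) /= Hsum0.
Qed.

Lemma aS i : a i = \sum_(j in S) q i j.
Proof. by rewrite /a /u dotZ_sumr. Qed.

Lemma anS i : a i = - \sum_(j | j \notin S) q i j.
Proof. by rewrite /q -dotZ_sumr sum_notS dotZNr opprK. Qed.

Lemma sum_aS : \sum_(i in S) a i = 2.
Proof. by rewrite -Huu /a /u dotZ_suml. Qed.

Lemma sum_anS : \sum_(i | i \notin S) a i = -2.
Proof. by rewrite /a -dotZ_suml sum_notS dotZNl Huu. Qed.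

Lemma a_ge0 i : i \in S -> 0 <= a i.
Proof.
move=> iS; rewrite anS oppr_ge0; apply: sumr_le0 => j jS; apply: Hob.
by apply/eqP => ij; move: jS; rewrite -ij iS.
Qed.

Lemma a_le0 i : i \notin S -> a i <= 0.
Proof.
move=> iS; rewrite aS; apply: sumr_le0 => j jS; apply: Hob.
by apply/eqP => ij; move: jS; rewrite -ij (negbTE iS).
Qed.

Lemma a_le_q j i : j \notin S -> i \in S -> a j <= q j i.
Proof.
move=> jS iS; rewrite aS; apply: sum_le1 => // k kS; apply: Hob.
by apply/eqP => jk; move: kS; rewrite -jk (negbTE jS).
Qed.

Lemma a_ge_m2 j : j \notin S -> -2 <= a j.
Proof. by move=> jS; rewrite -sum_anS; apply: sum_le1 => // k; apply: a_le0. Qed.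

Lemma choose_s : exists s, [/\ s \in S, 1 <= a s & zo != Some s].
Proof.
have H : 1 <= \sum_(i | (i \in S) && (zo != Some i)) a i.
  case E: zo => [z|].
    have Hz1 := Hz E; rewrite -/(a z) in Hz1.
    case zS: (z \in S).
      have Hs : \sum_(i in S) a i = a z + \sum_(i | (i \in S) && (Some z != Some i)) a i.
        rewrite (bigD1 z) //=; congr (_ + _); apply: eq_bigl => i.
        by congr (_ && _); apply/idP/idP => /eqP H; apply/eqP => H'; apply: H; [case: H'|rewrite H'].
      rewrite sum_aS in Hs; lia'.
    rewrite (eq_bigl (fun i => i \in S)) ?sum_aS // => i.
    case iS: (i \in S) => //=; apply/negP => /eqP [zi]; by rewrite zi iS in zS.
  by rewrite (eq_bigl (fun i => i \in S)) ?sum_aS // => i; rewrite andbT.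
have [s [/andP[sS zs] as1]] := sum_exists H.
by exists s.
Qed.


Lemma choose_t s : s \in S -> 1 <= a s -> exists t, t \notin S /\ q s t <= -1.
Proof.
move=> sS as1.
have H : 1 <= \sum_(j | j \notin S) - q s j by rewrite sumrN -anS.
have [t [tS qt]] := sum_exists H; exists t; split => //; lia'.
Qed.

Lemma dot_u_v i : dotZ u (v i) = a i. Proof. exact: dotZC. Qed.

Lemma sum_notS_t t : t \notin S ->
  \sum_(y | (y \notin S) && (y != t)) v y = - u - v t.
Proof.
move=> tS; apply/eqP; rewrite eq_sym subr_eq -sum_notS (bigD1 t) //= addrC.
by [].
Qed.

Lemma move_case2 s t : s \in S -> t \notin S -> 1 <= a s -> zo != Some s ->
  a t = -2 ->
  exists v', obtuse_superbase L v' /\ (exists l, v' l = - u) /\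
    (forall i, (a i = 0 \/ zo = Some i) -> v' i = v i).
Proof.
move=> sS tS as1 zs at2.
have st : s != t by apply/eqP => E; move: tS; rewrite -E sS.
have ts : t != s by rewrite eq_sym.
have others0 : forall i, i \notin S -> i != t -> a i = 0.
  move=> i iS it; have := sum_le2 (P := fun i => i \notin S) (F := a) (@a_le0) tS iS.
  rewrite eq_sym it sum_anS at2 => /(_ isT) H; have := a_le0 iS; lia'.
have qo0 : forall o j, o \in S -> j \notin S -> j != t -> q o j = 0.
  move=> o j oS jS jt; have := a_le_q jS oS; have := others0 j jS jt.
  have : q j o <= 0 by apply: Hob; apply/eqP => E; move: jS; rewrite E oS.
  rewrite qC; lia'.
have ao : forall o, o \in S -> a o = - q o t.
  move=> o oS; rewrite anS (sum_one (j := t)) // => j jS jt; exact: qo0.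
pose v' := fun i => if i == t then - u else if i == s then v s + v t + u else v i.
have v't : v' t = - u by rewrite /v' eqxx.
have v's : v' s = v s + v t + u by rewrite /v' (negbTE st) eqxx.
have v'o : forall o, o != t -> o != s -> v' o = v o.
  by move=> o ot os; rewrite /v' (negbTE ot) (negbTE os).
exists v'; split; last split.
- split.
  + move=> i; rewrite /v'; case: (i == t); first exact/inLN/HuL.
    case: (i == s); last exact: HvL.
    by apply: inLD; [apply: inLD|]; apply: HvL || apply: HuL.
  + move=> x Hx; have := (let: And4 _ Hsp _ _ := Hv in Hsp) x Hx.
    move=> [c Hc]; apply: (inspan_trans (w := v)); last by exists c.
    have vsS : inspan v' (v s).
      have -> : v s = v' s + \sum_(y | (y \notin S) && (y != t)) v' y.
        rewrite (eq_bigr (fun y => v y)); last first.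
          move=> y /andP[yS yt]; apply: v'o => //.
          by apply/eqP => E; move: yS; rewrite E sS.
        by rewrite sum_notS_t // v's addrA !addrK.
      apply: inspanD; first exact: inspan_gen.
      by apply: inspan_sum => i _; apply: inspan_gen.
    move=> i; case: (eqVneq i t) => [->|it].
      have -> : v t = v' s - v s + v' t by rewrite v's v't; vring.
      apply: inspanD; last exact: inspan_gen.
      by apply: inspanB => //; apply: inspan_gen.
    case: (eqVneq i s) => [->|is_] //.
    by rewrite -v'o //; apply: inspan_gen.
  + apply: (pair_combine (t := t) (s := s) (t' := t)).
    * move=> o ot; rewrite v't dotZNl; case: (eqVneq o s) => [->|os].
        rewrite v's !dotZDr dot_u_v dot_u_v Huu at2; lia'.
      rewrite v'o // dot_u_v; case oS: (o \in S).
        by have := a_ge0 oS; lia'.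
      by rewrite others0 ?oS // oppr0.
    * move=> o ot os; rewrite v's v'o // !dotZDl dot_u_v -/(q s o) -/(q t o).
      case oS: (o \in S).
        rewrite ao // (qC o t); have : q s o <= 0 by apply: Hob; rewrite eq_sym.
        lia'.
      rewrite others0 ?oS // addr0; have : q s o <= 0 by apply: Hob; rewrite eq_sym.
      have : q t o <= 0 by apply: Hob; rewrite eq_sym.
      lia'.
    * move=> o ot _ _; rewrite v't dotZNl; case: (eqVneq o s) => [->|os].
        rewrite v's !dotZDr dot_u_v dot_u_v Huu at2; lia'.
      rewrite v'o // dot_u_v; case oS: (o \in S).
        by have := a_ge0 oS; lia'.
      by rewrite others0 ?oS // oppr0.
    * move=> i j ij it is_ _ jt js _; rewrite !v'o //; exact: Hob.
  + rewrite (sumV_diff (v := v) (A := fun i => (i == t) || (i == s))); last first.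
      by move=> i /norP[it is_]; apply: v'o.
    rewrite Hsum0 add0r (sumV_two (j := t) (k := s)) ?eqxx ?orbT //; last first.
      by move=> i /orP[]/eqP->; rewrite ?eqxx.
    by rewrite v't v's; vring.
- by exists t.
- move=> i Hi; case: (eqVneq i t) => [Eit|it].
    exfalso; case: Hi => [|Ez]; first by rewrite Eit at2.
    by move: (Hz Ez); rewrite Eit; change (dotZ (v t) u) with (a t); rewrite at2.
  case: (eqVneq i s) => [Eis|is_]; last exact: v'o.
  exfalso; case: Hi => [|Ez]; first by rewrite Eis => H; move: as1; rewrite H.
  by move: zs; rewrite Ez Eis eqxx.
Qed.


Lemma move_case1 s t t' : s \in S -> t \notin S -> t' \notin S -> t' != t ->
  1 <= a s -> zo != Some s -> q s t <= -1 -> a t = -1 -> a t' = -1 ->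
  exists v', obtuse_superbase L v' /\ (exists l, v' l = - u) /\
    (forall i, (a i = 0 \/ zo = Some i) -> v' i = v i).
Proof.
move=> sS tS t'S t't as1 zs qst at1 at'1.
have dq : forall i j, dotZ (v i) (v j) = q i j by [].
have da : forall i, dotZ (v i) u = a i by [].
have Hz' : forall z, zo = Some z -> 0 <= a z <= 1 := Hz.
clear Hz; clearbody a q.
have st : s != t by apply/eqP => E; move: tS; rewrite -E sS.
have st' : s != t' by apply/eqP => E; move: t'S; rewrite -E sS.
have tt' : t != t' by rewrite eq_sym.
have ts : t != s by rewrite eq_sym.
have others0 : forall i, i \notin S -> i != t -> i != t' -> a i = 0.
  move=> i iS it it'.
  have := sum_le3 (P := fun i => i \notin S) (F := a) (@a_le0) tS t'S iS.
  rewrite tt' eq_sym it eq_sym it' sum_anS at1 at'1 => /(_ isT isT isT) H.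
  have := a_le0 iS; lia'.
have qst1 : q s t = -1 by have := a_le_q tS sS; rewrite qC; lia'.
have qto0 : forall o, o \in S -> o != s -> q t o = 0.
  move=> o oS os.
  have := sum_le2 (P := fun j => j \in S) (F := q t) _ sS oS.
  rewrite -aS at1 qC qst1 eq_sym os => /(_ _ isT) H.
  have : q t o <= 0 by apply: Hob; apply/eqP => E; move: tS; rewrite E oS.
  suff /H : forall k, k \in S -> q t k <= 0 by lia'.
  by move=> k kS; apply: Hob; apply/eqP => E; move: tS; rewrite E kS.
have qoj0 : forall o j, o \in S -> j \notin S -> j != t -> j != t' -> q o j = 0.
  move=> o j oS jS jt jt'; have := a_le_q jS oS; have := others0 j jS jt jt'.
  have : q j o <= 0 by apply: Hob; apply/eqP => E; move: jS; rewrite E oS.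
  rewrite qC; lia'.
have ao : forall o, o \in S -> a o = - (q o t + q o t').
  move=> o oS; rewrite anS (sum_two (j := t) (k := t')) // => j jS jt jt'; exact: qoj0.
pose v' := fun i => if i == t then - u else if i == s then v s + v t
  else if i == t' then v t' + u else v i.
have v't : v' t = - u by rewrite /v' eqxx.
have v's : v' s = v s + v t by rewrite /v' (negbTE st) eqxx.
have v't' : v' t' = v t' + u by rewrite /v' (negbTE t't) eq_sym (negbTE st') eqxx.
have v'o : forall o, o != t -> o != s -> o != t' -> v' o = v o.
  by move=> o ot os ot'; rewrite /v' (negbTE ot) (negbTE os) (negbTE ot').
exists v'; split; last split.
- split.
  + move=> i; rewrite /v'; case: (i == t); first exact/inLN/HuL.
    case: (i == s); first by apply: inLD; apply: HvL.
    case: (i == t'); last exact: HvL.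
    by apply: inLD; [apply: HvL|apply: HuL].
  + move=> x Hx; have := (let: And4 _ Hsp _ _ := Hv in Hsp) x Hx.
    move=> [c Hc]; apply: (inspan_trans (w := v)); last by exists c.
    have HP : \sum_(y | (y \notin S) && (y != t)) v' y =
              \sum_(y | (y \notin S) && (y != t)) v y + u.
      rewrite -[LHS](subrK (\sum_(y | (y \notin S) && (y != t)) v y)) -sumrB addrC.
      congr (_ + _); rewrite (sumV_one (j := t')); [by rewrite v't'; vring | by rewrite t'S t't | ].
      move=> y /andP[yS yt] yt'; rewrite v'o ?subrr //.
      by apply/eqP => E; move: yS; rewrite E sS.
    have vsS : inspan v' (v s).
      have -> : v s = v' s + \sum_(y | (y \notin S) && (y != t)) v' y.
        by rewrite HP sum_notS_t // v's; vring.
      apply: inspanD; first exact: inspan_gen.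
      by apply: inspan_sum => i _; apply: inspan_gen.
    move=> i; case: (eqVneq i t) => [->|it].
      have -> : v t = v' s - v s by rewrite v's; vring.
      by apply: inspanB => //; apply: inspan_gen.
    case: (eqVneq i s) => [->|is_] //.
    case: (eqVneq i t') => [->|it'].
      have -> : v t' = v' t' + v' t by rewrite v't' v't; vring.
      by apply: inspanD; apply: inspan_gen.
    by rewrite -v'o //; apply: inspan_gen.
  + apply: (pair_combine (t := t) (s := s) (t' := t')).
    * move=> o ot; rewrite v't dotZNl; case: (eqVneq o s) => [->|os].
        rewrite v's !dotZDr !dot_u_v at1; lia'.
      case: (eqVneq o t') => [->|ot'].
        rewrite v't' !dotZDr !dot_u_v Huu at'1; lia'.
      rewrite v'o // dot_u_v; case oS: (o \in S).
        by rewrite oppr_le0; apply: a_ge0.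
      by rewrite others0 ?oS // oppr0.
    * move=> o ot os; rewrite v's !dotZDl; case: (eqVneq o t') => [->|ot'].
        rewrite v't' !dotZDr !dq ?dot_u_v ?da.
        rewrite (ao s sS) qst1 at1.
        have : q t t' <= 0 by apply: Hob.
        lia'.
      rewrite v'o // !dq.
      have : q s o <= 0 by apply: Hob; rewrite eq_sym.
      have : q t o <= 0 by apply: Hob; rewrite eq_sym.
      by move=> h1 h2; rewrite -[0]addr0; apply: lerD.
    * move=> o ot os ot'; rewrite v't' v'o // dotZDl dot_u_v dq.
      case oS: (o \in S).
        by rewrite ao // (qC o t) qto0 // (qC o t') add0r subrr.
      rewrite others0 ?oS // addr0; apply: Hob; by rewrite eq_sym.
    * move=> i j ij it is_ it' jt js jt'; rewrite !v'o // dq; exact: Hob.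
  + rewrite (sumV_diff (v := v) (A := fun i => [|| i == t, i == s | i == t'])); last first.
      by move=> i /norP[it /norP[is_ it']]; apply: v'o.
    rewrite Hsum0 add0r (sumV_three (j := t) (k := s) (l := t')) ?eqxx ?orbT ?ts ?tt' ?st' //; last first.
      by move=> i /or3P[]/eqP->; rewrite ?eqxx.
    by rewrite v't v's v't'; vring.
- by exists t.
- move=> i Hi; case: (eqVneq i t) => [Eit|it].
    exfalso; case: Hi => [|Ez]; first by rewrite Eit at1.
    by move: (Hz' _ Ez); rewrite Eit at1.
  case: (eqVneq i t') => [Eit|it'].
    exfalso; case: Hi => [|Ez]; first by rewrite Eit at'1.
    by move: (Hz' _ Ez); rewrite Eit at'1.
  case: (eqVneq i s) => [Eis|is_]; last exact: v'o.
  exfalso; case: Hi => [|Ez]; first by rewrite Eis => H; move: as1; rewrite H.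
  by move: zs; rewrite Ez Eis eqxx.
Qed.

Lemma move_main : exists v', obtuse_superbase L v' /\ (exists l, v' l = - u) /\
    (forall i, (a i = 0 \/ zo = Some i) -> v' i = v i).
Proof.
have [s [sS as1 zs]] := choose_s.
have [t [tS qst]] := choose_t sS as1.
have atq := a_le_q tS sS; rewrite qC in atq.
have atm := a_ge_m2 tS.
have [at2|at1] : a t = -2 \/ a t = -1 by lia'.
  exact: (move_case2 sS tS as1 zs at2).
have Hs : \sum_(i | i \notin S) a i = a t + \sum_(i | (i \notin S) && (i != t)) a i.
  by rewrite (bigD1 t).
rewrite sum_anS at1 in Hs.
have Hs' : \sum_(i | (i \notin S) && (i != t)) a i = -1 by lia'.
have H : 1 <= \sum_(i | (i \notin S) && (i != t)) - a i.
  by rewrite sumrN Hs'.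
have [t' [/andP[t'S t't] at'1]] := sum_exists H.
have at'2 : -1 <= a t'.
  have : \sum_(i | (i \notin S) && (i != t)) a i <= a t'.
    apply: sum_le1 => [k /andP[kS _]|]; [exact: a_le0|by rewrite t'S].
  by rewrite Hs'.
have at'e : a t' = -1 by lia'.
exact: (move_case1 sS tS t'S t't as1 zs qst at1 at'e).
Qed.

End Move.



Lemma dot_ee r (a c : 'I_r) : dotZ (eZ a) (eZ c) = (a == c)%:R.
Proof. by rewrite dotZ_eZl eZ_coord. Qed.

Lemma dot_ee4 r (a b c d : 'I_r) :
  dotZ (eZ a - eZ b) (eZ c - eZ d) =
  (a == c)%:R - (a == d)%:R - (b == c)%:R + (b == d)%:R.
Proof. by rewrite !dotZBl !dotZBr !dot_ee; ring. Qed.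

Lemma ordF k (x y : 'I_k) : nat_of_ord x <> nat_of_ord y -> (x == y) = false.
Proof. by move=> H; apply/negbTE; rewrite -val_eqE; apply/eqP. Qed.

Theorem lemma4p7 (n : nat) (s : 'rV[int]_n.+1) :
  changemaker s -> 2 <= s 0 ord_max ->
  (exists v : 'I_n.+1 -> 'rV[int]_n.+1, obtuse_superbase (orth_lattice s) v) ->
  exists (p : 'S_n.+1) (v : 'I_n.+1 -> 'rV[int]_n.+1),
    (forall i, s 0 (p i) = s 0 i) /\
    obtuse_superbase (orth_lattice s) v /\
    (forall i j : 'I_n.+1, val j = (val i).+1 -> s 0 j = s 0 i ->
       exists l, v l = eZ (p i) - eZ (p j)).
Proof.
move=> Hc _ [v0 Hv0].
pose P m := exists v : 'I_n.+1 -> 'rV[int]_n.+1, obtuse_superbase (orth_lattice s) v /\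
  (forall i j : 'I_n.+1, nat_of_ord j = (nat_of_ord i).+1 -> (nat_of_ord i < m)%N -> s 0 j = s 0 i ->
       exists l, v l = eZ i - eZ j).
have HP : forall m, P m.
  elim => [|m [v [Hv IH]]]; first by exists v0; split.
  have [Hm|Hm] := ltnP m.+1 n.+1; last first.
    exists v; split => // i j Hj Hi Hs; apply: IH Hs => //.
    move: (ltn_ord j); rewrite Hj; lia.
  have Hm' : (m < n.+1)%N by lia.
  pose i := Ordinal Hm'; pose j := Ordinal Hm.
  have vi : nat_of_ord i = m by [].
  have vj : nat_of_ord j = m.+1 by [].
  case: (eqVneq (s 0 j) (s 0 i)) => [Hsij|Hsij]; last first.
    exists v; split => // i1 j1 Hj Hi Hs.
    case: (ltnP (nat_of_ord i1) m) => Hi1; first exact: IH.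
    have Ei : i1 = i by apply: val_inj => /=; lia.
    have Ej : j1 = j by apply: val_inj => /=; lia.
    by move: Hsij; rewrite -Ei -Ej Hs eqxx.
  pose x := eZ j - eZ i.
  have ij : (i == j) = false by apply: ordF => /=; lia.
  have ji : (j == i) = false by rewrite eq_sym.
  have HxL : x \in orth_lattice s.
    by rewrite inL dotZBl !dotZ_eZl Hsij subrr.
  have Hxx : dotZ x x = 2 by rewrite /x dot_ee4 !eqxx ij ji.
  have [S HS] := levelset Hc Hv HxL Hxx.
  pose zo : option 'I_n.+1 := None.
  have [zo' [Hzo Hprev]] : exists zo' : option 'I_n.+1,
      (forall z, zo' = Some z -> 0 <= dotZ (v z) (\sum_(k in S) v k) <= 1) /\
      (forall i1 j1 : 'I_n.+1, nat_of_ord j1 = (nat_of_ord i1).+1 -> (nat_of_ord i1 < m)%N -> s 0 j1 = s 0 i1 ->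
         exists l, v l = eZ i1 - eZ j1 /\ (dotZ (v l) x = 0 \/ zo' = Some l)).
    case: (posnP m) => [m0|mpos].
      by exists None; split => // i1 j1 _; rewrite m0 ltn0.
    have Hm0 : (m.-1 < n.+1)%N by lia.
    pose i0 := Ordinal Hm0.
    have vi0 : nat_of_ord i0 = m.-1 by [].
    have i0i : (i0 == i) = false by apply: ordF; rewrite vi0 vi; lia.
    have i0j : (i0 == j) = false by apply: ordF; rewrite vi0 vj; lia.
    case: (eqVneq (s 0 i) (s 0 i0)) => [Hs0|Hs0].
      have [l0 Hl0] := IH i0 i (ltac:(rewrite vi vi0; lia)) (ltac:(rewrite vi0; lia)) Hs0.
      exists (Some l0); split.
        move=> z [<-]; rewrite -HS Hl0 /x dot_ee4 i0j i0i eqxx ij /=; lia.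
      move=> i1 j1 Hj1 Hi1 Hs1; have [l1 Hl1] := IH i1 j1 Hj1 Hi1 Hs1.
      case: (eqVneq (nat_of_ord i1) m.-1) => Hv1.
        have Ei : i1 = i0 by apply: val_inj; rewrite /= Hv1.
        have Ej : j1 = i by apply: val_inj; rewrite /= Hj1 Hv1; lia.
        by exists l0; split; [rewrite Ei Ej|right].
      exists l1; split => //; left.
      rewrite Hl1 /x dot_ee4.
      rewrite (@ordF _ i1 j); last by rewrite vj; lia.
      rewrite (@ordF _ i1 i); last by rewrite vi; lia.
      rewrite (@ordF _ j1 j); last by rewrite vj; lia.
      rewrite (@ordF _ j1 i); last by rewrite vi; lia.
      by rewrite subrr.
    exists None; split => // i1 j1 Hj1 Hi1 Hs1; have [l1 Hl1] := IH i1 j1 Hj1 Hi1 Hs1.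
    case: (eqVneq (nat_of_ord i1) m.-1) => Hv1.
      have Ei : i1 = i0 by apply: val_inj; rewrite /= Hv1.
      have Ej : j1 = i by apply: val_inj; rewrite /= Hj1 Hv1; lia.
      by move: Hs0; rewrite -Ei -Ej Hs1 eqxx.
    exists l1; split => //; left.
    rewrite Hl1 /x dot_ee4.
    rewrite (@ordF _ i1 j); last by rewrite vj; lia.
    rewrite (@ordF _ i1 i); last by rewrite vi; lia.
    rewrite (@ordF _ j1 j); last by rewrite vj; lia.
    rewrite (@ordF _ j1 i); last by rewrite vi; lia.
    by rewrite subrr.
  have Huu : dotZ (\sum_(k in S) v k) (\sum_(k in S) v k) = 2 by rewrite -HS.
  have [v' [Hv' [[l Hl] Hpres]]] := move_main Hv Huu Hzo.
  exists v'; split => // i1 j1 Hj1 Hi1 Hs1.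
  case: (ltnP (nat_of_ord i1) m) => Hi1'.
    have [l1 [Hl1 Hor]] := Hprev i1 j1 Hj1 Hi1' Hs1.
    exists l1; rewrite -Hl1; apply: Hpres; rewrite /= -HS; exact: Hor.
  have Ei : i1 = i by apply: val_inj => /=; lia.
  have Ej : j1 = j by apply: val_inj => /=; lia.
  by exists l; rewrite Hl -HS Ei Ej /x opprB.
have [v [Hv H]] := HP n.+1.
exists 1%g, v; split; first by move=> i; rewrite perm1.
split => // i j Hj Hs; rewrite !perm1; apply: H => //.
Qed.
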